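(* For every graph $G$ and every positive integer $\alpha$, $\mathrm{tw}(G)\le 5\,\mathrm{ecrw}(G)-1$ and $\mathrm{tw}(G)\le 3\,\mathrm{ecrw}_\alpha(G)+2\alpha-1$.
   Context: A tree-cut decomposition of a graph $G$ is a pair $\mathcal{T}=(T,\{X_t\}_{t\in V(T)})$ where $T$ is a tree and the bags $X_t\subseteq V(G)$ are pairwise disjoint (possibly empty) with $\bigcup_{t\in V(T)}X_t=V(G)$. For a node $t$ of $T$, let $T_1,\dots,T_m$ be the connected components of $T-t$ and $Z_i=\bigcup_{s\in V(T_i)}X_s$; $\mathrm{cross}_{\mathcal{T}}(t)$ is the number of edges of $G$ whose two endpoints lie in two distinct sets among $Z_1,\dots,Z_m$ (if $T$ has one node, $\mathrm{cross}_{\mathcal T}(t)=0$). The crossing number of $\mathcal{T}$ is $\max_{t}\mathrm{cross}_{\mathcal{T}}(t)$, and the thickness of $\mathcal{T}$ is $\max_t|X_t|$. $\mathrm{ecrw}_\alpha(G)$ is the minimum crossing number over tree-cut decompositions of $G$ of thickness at most $\alpha$. The edge-crossing width of $\mathcal T$ is the maximum of its crossing number and its thickness, and $\mathrm{ecrw}(G)$ is the minimum edge-crossing width over all tree-cut decompositions of $G$. $\mathrm{tw}(G)$ denotes tree-width. *)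

(* Defs.v *)
From HB Require Import structures.
From mathcomp Require Import all_boot all_order all_algebra.
Set Implicit Arguments. Unset Strict Implicit. Unset Printing Implicit Defensive.
Import Order.TTheory GRing.Theory Num.Theory.

Definition is_tree (T : finType) (tE : rel T) : Prop :=
  [/\ symmetric tE, irreflexive tE, 0 < #|T|,
      (forall x y, connect tE x y) &
      (forall x y, tE x y ->
         ~~ connect (fun a b => tE a b && ([set a; b] != [set x; y])) x y)].

Definition avoid (T : finType) (tE : rel T) (t : T) : rel T :=
  fun a b => [&& tE a b, a != t & b != t].

(* A tree-cut decomposition (T, {X_t}) with pairwise disjoint bags covering V
   is encoded by the map f : V -> T sending a vertex to the node whose bag
   contains it; X_t = [set v | f v == t]. *)
Definition bag (T V : finType) (f : V -> T) (t : T) : {set V} := [set v | f v == t].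

(* Edges of G are the 2-sets {u,v} with e u v. cross(t) counts edges whose
   endpoints lie in two distinct components of T - t. *)
Definition cross (T : finType) (tE : rel T) (V : finType) (e : rel V)
    (f : V -> T) (t : T) : nat :=
  #|[set E : {set V} | [exists u, exists v,
       [&& e u v, E == [set u; v], f u != t, f v != t &
           ~~ connect (avoid tE t) (f u) (f v)]]]|.

Definition crossing_number (T : finType) (tE : rel T) (V : finType) (e : rel V)
    (f : V -> T) : nat := \max_(t : T) cross tE e f t.

Definition thickness (T V : finType) (f : V -> T) : nat :=
  \max_(t : T) #|bag f t|.

Definition ecrw_width (T : finType) (tE : rel T) (V : finType) (e : rel V)
    (f : V -> T) : nat := maxn (crossing_number tE e f) (thickness f).

Definition is_ecrw (V : finType) (e : rel V) (k : nat) : Prop :=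
  (exists (T : finType) (tE : rel T) (f : V -> T),
      is_tree tE /\ ecrw_width tE e f = k) /\
  (forall (T : finType) (tE : rel T) (f : V -> T),
      is_tree tE -> k <= ecrw_width tE e f).

Definition is_ecrw_alpha (V : finType) (e : rel V) (alpha k : nat) : Prop :=
  (exists (T : finType) (tE : rel T) (f : V -> T),
      [/\ is_tree tE, thickness f <= alpha & crossing_number tE e f = k]) /\
  (forall (T : finType) (tE : rel T) (f : V -> T),
      is_tree tE -> thickness f <= alpha -> k <= crossing_number tE e f).

(* Tree decompositions and tree-width (width = max bag size - 1, an integer,
   so that the empty graph has tree-width -1). *)
Definition is_tree_decomposition (T : finType) (tE : rel T) (V : finType)
    (e : rel V) (B : T -> {set V}) : Prop :=
  [/\ is_tree tE,
      (forall v, exists t, v \in B t),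
      (forall u v, e u v -> exists t, (u \in B t) && (v \in B t)) &
      (forall v s1 s2, v \in B s1 -> v \in B s2 ->
         connect (fun a b => [&& tE a b, v \in B a & v \in B b]) s1 s2)].

Definition td_width (T V : finType) (B : T -> {set V}) : int :=
  ((\max_(t : T) #|B t|)%:Z - 1)%R.

Definition is_tw (V : finType) (e : rel V) (w : int) : Prop :=
  (exists (T : finType) (tE : rel T) (B : T -> {set V}),
      is_tree_decomposition tE e B /\ td_width B = w) /\
  (forall (T : finType) (tE : rel T) (B : T -> {set V}),
      is_tree_decomposition tE e B -> (w <= td_width B)%R).

(* Main.v *)
Require Import Defs.
From mathcomp Require Import all_boot all_order all_algebra.
Import Order.TTheory GRing.Theory Num.Theory.
From mathcomp Require Import zify.
Set Implicit Arguments. Unset Strict Implicit. Unset Printing Implicit Defensive.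

Lemma connect_gen (A : finType) (E : rel A) (P : A -> Prop) x :
  P x -> (forall y z, P y -> E y z -> P z) -> forall z, connect E x z -> P z.
Proof.
move=> Px H z /connectP [p pth ->]; elim: p x Px pth => //= y p IH x Px /andP[exy pth].
exact: IH (H _ _ Px exy) pth.
Qed.

Section Tree.
Variables (T : finType) (tE : rel T).
Hypothesis tree : is_tree tE.

Lemma tsym : symmetric tE. Proof. by case: tree. Qed.
Lemma tirr : irreflexive tE. Proof. by case: tree. Qed.
Lemma tconn x y : connect tE x y. Proof. by case: tree. Qed.
Lemma tbridge x y : tE x y ->
  ~~ connect (fun a b => tE a b && ([set a; b] != [set x; y])) x y.
Proof. by case: tree => _ _ _ _; apply. Qed.
Arguments tbridge {x y}.

Lemma avoid_sym t : symmetric (avoid tE t).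
Proof. by move=> a b; rewrite /avoid tsym; case: (a != t); case: (b != t); rewrite /= ?andbT ?andbF. Qed.

Lemma aconn_sym t a b : connect (avoid tE t) a b = connect (avoid tE t) b a.
Proof. exact: (sym_connect_sym (avoid_sym t)). Qed.

Lemma avoid_sub t c a b : connect (avoid tE t) a b ->
  connect (fun x y => tE x y && ([set x; y] != [set t; c])) a b.
Proof.
apply: connect_sub => x y /and3P[exy xt yt]; apply: connect1; rewrite exy /=.
apply/negP => /eqP Hs; have : t \in [set x; y] by rewrite Hs !inE eqxx.
by rewrite !inE => /orP[] /eqP Ht; move: xt yt; rewrite Ht eqxx.
Qed.

Arguments avoid_sub {t} c {a b}.

Lemma exists_step a x : a != x -> exists b, tE a b && connect (avoid tE a) b x.
Proof.
move=> ax.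
have : x = a \/ exists b, tE a b && connect (avoid tE a) b x.
  apply: (@connect_gen _ _ (fun z => z = a \/ exists b, tE a b && connect (avoid tE a) b z) a _ _ x (tconn a x)).
    by left.
  move=> y z Py yz.
  case: (eqVneq z a) => [->|za]; first by left.
  case: (eqVneq y a) => [ya|ya]; first by right; exists z; rewrite -ya yz connect0.
  case: Py => [/eqP|[b /andP[ab cb]]]; first by rewrite (negbTE ya).
  right; exists b; rewrite ab /=.
  apply: connect_trans cb (connect1 _); by rewrite /avoid yz ya za.
by case=> [xa|//]; move: ax; rewrite xa eqxx.
Qed.

Definition sep t a b := ~~ connect (avoid tE t) a b.

Lemma step_unique a b b' x : tE a b -> connect (avoid tE a) b x ->
  tE a b' -> connect (avoid tE a) b' x -> b = b'.
Proof.
move=> ab bx ab' b'x; apply/eqP/negPn/negP => bb'.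
move: (tbridge ab) => /negP; apply.
apply: (@connect_trans _ _ b').
  apply: connect1; rewrite ab' /=; apply/negP => /eqP Hs.
  have : b' \in [set a; b] by rewrite -Hs !inE eqxx orbT.
  rewrite !inE => /orP[] /eqP H.
    by move: ab'; rewrite H tirr.
  by move: bb'; rewrite H eqxx.
apply: (avoid_sub b); apply: connect_trans b'x _; by rewrite aconn_sym.
Qed.

Lemma step_sep a b x : tE a b -> connect (avoid tE a) b x -> b != x -> sep b a x.
Proof.
move=> ab bx nbx; apply/negP => ax.
move: (tbridge ab) => /negP; apply.
apply: (@connect_trans _ _ x).
  apply: (connect_sub _ (avoid_sub a ax)) => u w /andP[uw ne]; apply: connect1.
  by rewrite uw /= (setUC [set a]).
by apply: (avoid_sub b); rewrite aconn_sym.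
Qed.

Lemma step_N a b x t : tE a b -> connect (avoid tE a) b x ->
  t != b -> t != x -> sep t b x -> (t != a) && sep t a x.
Proof.
move=> ab bx tb tx sb.
have ta : t != a by apply/negP => /eqP ta; move: sb; rewrite /sep ta bx.
rewrite ta /=; apply/negP => ax; move/negP: sb; apply.
apply: connect_trans (connect1 _) ax.
by rewrite /avoid tsym ab eq_sym tb eq_sym ta.
Qed.

Arguments exists_step {a x}. Arguments step_unique {a b b' x}.
Arguments step_sep {a b x}. Arguments step_N {a b x t}.

Definition Nset x s := [set t | [&& t != s, t != x & sep t s x]].

Lemma convex_connect (D : T -> bool) x : D x ->
  (forall s t, D s -> t \in Nset x s -> D t) ->
  forall s, D s -> connect (fun a b => [&& tE a b, D a & D b]) s x.
Proof.
move=> Dx cl s Ds.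
suff H : forall n s, D s -> #|Nset x s| < n ->
    connect (fun a b => [&& tE a b, D a & D b]) s x by exact: (H _ s Ds (ltnSn _)).
elim=> [|n IH] {}s {}Ds Hn; first by rewrite ltn0 in Hn.
case: (eqVneq s x) => [->|sx]; first exact: connect0.
have [b /andP[sb bx]] := exists_step sx.
case: (eqVneq b x) => [bx'|nbx].
  by apply: connect1; move: Dx; rewrite -bx' sb Ds => ->.
have bN : b \in Nset x s.
  rewrite inE nbx (step_sep sb bx nbx) !andbT; apply/eqP => bs.
  by move: sb; rewrite bs tirr.
have Db : D b := cl _ _ Ds bN.
apply: (@connect_trans _ _ b); first by apply: connect1; rewrite sb Ds Db.
apply: IH => //.
have pr : Nset x b \proper Nset x s.
  apply/properP; split.
    apply/subsetP => t; rewrite !inE => /and3P[tb tx st].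
    by have /andP[-> ->] := step_N sb bx tb tx st; rewrite tx.
  by exists b => //; rewrite inE eqxx.
by apply: leq_trans (proper_card pr) _.
Qed.

Lemma sep_sym t a b : sep t a b = sep t b a.
Proof. by rewrite /sep aconn_sym. Qed.

Lemma sep_refl t a : sep t a a = false.
Proof. by rewrite /sep connect0. Qed.

Definition par (r a : T) : T :=
  if [pick b | tE a b && connect (avoid tE a) b r] is Some b then b else a.

Lemma par_edge r a : par r a != a -> tE a (par r a).
Proof.
rewrite /par; case: pickP => [b /andP[]//|_]; by rewrite eqxx.
Qed.

Lemma par_unique r a b : tE a b -> connect (avoid tE a) b r -> par r a = b.
Proof.
move=> ab br; rewrite /par; case: pickP => [b' /andP[ab' b'r]|none].
  exact: (step_unique ab' b'r ab br).
by move: (none b); rewrite ab br.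
Qed.

Lemma par_spec r a b : tE a b -> par r a = b \/ par r b = a.
Proof.
move=> ab.
have : [\/ connect (avoid tE a) b r, connect (avoid tE b) a r, r = a | r = b].
  apply: (@connect_gen _ _ (fun z => [\/ connect (avoid tE a) b z,
      connect (avoid tE b) a z, z = a | z = b]) a _ _ r (tconn a r)).
    by apply: Or43.
  move=> y z Py yz.
  case: (eqVneq z a) => [->|za]; first by apply: Or43.
  case: (eqVneq z b) => [->|zb]; first by apply: Or44.
  case: (eqVneq y a) => [ya|ya].
    apply: Or42; apply: connect1; rewrite /avoid -ya yz zb /= andbT.
    by rewrite ya; apply/negP => /eqP H; move: ab; rewrite H tirr.
  case: (eqVneq y b) => [yb|yb].
    apply: Or41; apply: connect1; rewrite /avoid -yb yz za /= andbT.
    by rewrite yb; apply/negP => /eqP H; move: ab; rewrite H tirr.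
  case: Py => [H|H|H|H].
  - by apply: Or41; apply: connect_trans H (connect1 _); rewrite /avoid yz ya za.
  - by apply: Or42; apply: connect_trans H (connect1 _); rewrite /avoid yz yb zb.
  - by move: ya; rewrite H eqxx.
  - by move: yb; rewrite H eqxx.
case=> H.
- by left; apply: par_unique.
- by right; apply: par_unique => //; rewrite tsym.
- by right; apply: par_unique; [rewrite tsym | rewrite H connect0].
- by left; apply: par_unique => //; rewrite H connect0.
Qed.

Lemma stay t s a : sep t s a -> forall y, connect (avoid tE t) a y -> connect (avoid tE s) a y.
Proof.
move=> sta y ay.
suff: connect (avoid tE t) a y && connect (avoid tE s) a y by case/andP.
apply: (@connect_gen _ _ (fun y => connect (avoid tE t) a y && connect (avoid tE s) a y) a _ _ y ay).
  by rewrite /= !connect0.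
move=> u w /= /andP[au as_] /and3P[uw ut wt].
have aw : connect (avoid tE t) a w by apply: connect_trans au (connect1 _); rewrite /avoid uw ut wt.
rewrite aw /=; apply: connect_trans as_ (connect1 _); rewrite /avoid uw /=.
apply/andP; split; apply/negP => /eqP H.
  by move: sta; rewrite /sep aconn_sym -H au.
by move: sta; rewrite /sep aconn_sym -H aw.
Qed.
End Tree.

Lemma card_bigcup_le (I W : finType) (P : pred I) (F : I -> {set W}) :
  #|\bigcup_(i | P i) F i| <= \sum_(i | P i) #|F i|.
Proof.
elim/big_rec2: _ => [|i A n _ H]; first by rewrite cards0.
apply: leq_trans (leq_card_setU _ _).1 _.
by rewrite leq_add2l.
Qed.

Section Decomp.
Variables (T : finType) (tE : rel T) (V : finType) (e : rel V) (f : V -> T) (r : T).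
Hypotheses (tree : is_tree tE) (esym : symmetric e).

Definition Cr t := [set u | [exists z, [&& e u z, f u != t, f z != t & sep tE t (f u) (f z)]]].
Definition Bd t := [set u | [|| f u == t, f u == par tE r t | u \in Cr t]].

Lemma Bd_cover v : v \in Bd (f v).
Proof. by rewrite inE eqxx. Qed.

Lemma Bd_edge u v : e u v -> exists t, (u \in Bd t) && (v \in Bd t).
Proof.
move=> uv.
case: (eqVneq (f u) (f v)) => [fuv|fuv].
  by exists (f u); rewrite !inE eqxx fuv eqxx.
case Ha : (tE (f u) (f v)).
  case: (par_spec tree r Ha) => H.
    by exists (f u); rewrite !inE eqxx H eqxx orbT.
  by exists (f v); rewrite !inE eqxx H eqxx orbT.
have [b /andP[ub bv]] := exists_step tree fuv.
have nbv : b != f v by apply/negP => /eqP H; move: ub; rewrite H Ha.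
have sb := step_sep tree ub bv nbv.
have nbu : f u != b by apply/negP => /eqP H; move: ub; rewrite H (tirr tree).
exists b; rewrite !inE; apply/andP; split; apply/orP; right; apply/orP; right;
  apply/existsP.
  by exists v; rewrite uv nbu eq_sym nbv sb.
by exists u; rewrite esym uv nbu eq_sym nbv (sep_sym tree) sb.
Qed.

Lemma Bd_conn v s1 s2 : v \in Bd s1 -> v \in Bd s2 ->
  connect (fun a b => [&& tE a b, v \in Bd a & v \in Bd b]) s1 s2.
Proof.
move=> v1 v2.
have cl : forall s t, v \in Bd s -> t \in Nset tE (f v) s -> v \in Bd t.
  move=> s t vs; rewrite inE => /and3P[ts tv st].
  move: vs; rewrite inE => /or3P[/eqP H|/eqP H|].
  - by move: st; rewrite H sep_refl.
  - case: (eqVneq s (f v)) => [E|E]; first by move: st; rewrite E sep_refl.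
    have sp : par tE r s != s by rewrite -H eq_sym.
    have := par_edge sp; rewrite -H => sfv.
    move: st; rewrite /sep (connect1 (e := avoid tE t) (x := s) (y := f v)) //.
    by rewrite /avoid sfv eq_sym ts eq_sym tv.
  rewrite inE => /existsP[z /and4P[vz vs zs sz]].
  have sC : forall y, connect (avoid tE t) (f v) y -> connect (avoid tE s) (f v) y.
    exact: (stay tree st).
  rewrite inE; apply/orP; right; apply/orP; right; rewrite inE; apply/existsP; exists z.
  rewrite vz eq_sym tv /=; apply/andP; split.
    apply/negP => /eqP zt.
    have [t' /andP[tt' t'v]] := exists_step tree tv.
    have ct' : connect (avoid tE s) (f v) t' by apply: sC; rewrite (aconn_sym tree).
    move: sz; rewrite /sep zt; apply/negP/negPn.
    apply: connect_trans ct' (connect1 _).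
    rewrite /avoid (tsym tree) tt' /=; apply/andP; split.
      apply/negP => /eqP H; move: st; rewrite /sep -H t'v.
      by [].
    exact: ts.
  apply/negP => /sC H; move: sz; rewrite /sep H.
  by [].
set R := (fun a b => [&& tE a b, v \in Bd a & v \in Bd b]).
have Rs : symmetric R by move=> a b; rewrite /R (tsym tree); case: (v \in Bd a); case: (v \in Bd b); rewrite /= ?andbT ?andbF.
have c1 := convex_connect tree (Bd_cover v) cl v1.
have c2 := convex_connect tree (Bd_cover v) cl v2.
apply: connect_trans c1 _; by rewrite (sym_connect_sym Rs).
Qed.

Lemma Cr_card t : #|Cr t| <= 2 * cross tE e f t.
Proof.
rewrite /cross.
set S := [set E : {set V} | _].
have sub : Cr t \subset \bigcup_(E in S) E.
  apply/subsetP => u; rewrite inE => /existsP[z /and4P[uz ut zt sz]].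
  apply/bigcupP; exists [set u; z]; last by rewrite !inE eqxx.
  rewrite inE; apply/existsP; exists u; apply/existsP; exists z.
  by rewrite uz eqxx ut zt.
apply: leq_trans (subset_leq_card sub) _.
apply: leq_trans (card_bigcup_le _ _) _.
rewrite mulnC -sum_nat_const; apply: leq_sum => E.
rewrite inE => /existsP[u /existsP[z /and5P[_ /eqP -> _ _ _]]].
by rewrite cards2; case: (u != z).
Qed.

Lemma Bd_card t : #|Bd t| <= #|bag f t| + #|bag f (par tE r t)| + 2 * cross tE e f t.
Proof.
have sub : Bd t \subset (bag f t :|: bag f (par tE r t)) :|: Cr t.
  by apply/subsetP => u; rewrite !inE orbA.
apply: leq_trans (subset_leq_card sub) _.
apply: leq_trans (leq_card_setU _ _).1 _.
rewrite leq_add ?Cr_card //.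
exact: (leq_card_setU _ _).1.
Qed.

End Decomp.


Lemma td_exists (T : finType) (tE : rel T) (V : finType) (e : rel V) (f : V -> T) :
  is_tree tE -> symmetric e -> exists B : T -> {set V},
  is_tree_decomposition tE e B /\
  \max_(t : T) #|B t| <= 2 * thickness f + 2 * crossing_number tE e f.
Proof.
move=> tree esym.
have [r _] : exists r : T, r \in T by apply/card_gt0P; case: tree.
exists (Bd tE e f r); split.
  split => //.
  - by move=> v; exists (f v); apply: Bd_cover.
  - by move=> u v uv; apply: Bd_edge tree esym _ _ uv.
  - move=> v s1 s2; exact: Bd_conn.
apply/bigmax_leqP => t _; apply: leq_trans (Bd_card tE e f r t) _.
have h1 : #|bag f t| <= thickness f by rewrite /thickness (leq_bigmax (F := fun t => #|bag f t|) t).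
have h2 : #|bag f (par tE r t)| <= thickness f.
  by rewrite /thickness (leq_bigmax (F := fun t => #|bag f t|) (par tE r t)).
have h3 : cross tE e f t <= crossing_number tE e f.
  by rewrite /crossing_number (leq_bigmax (F := fun t => cross tE e f t) t).
lia.
Qed.

Theorem lemma3p1 (V : finType) (e : rel V) (He : symmetric e) (Hi : irreflexive e) :
  (forall (k : nat) (w : int), is_ecrw e k -> is_tw e w ->
      (w <= 5%:Z * k%:Z - 1)%R) /\
  (forall (alpha : nat), 0 < alpha ->
    forall (k : nat) (w : int), is_ecrw_alpha e alpha k -> is_tw e w ->
      (w <= 3%:Z * k%:Z + 2%:Z * alpha%:Z - 1)%R).
Proof.
split.
  move=> k w [[T [tE [f [tr wid]]]] _] [_ mintw].
  have [B [TD Hm]] := td_exists f tr He.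
  apply: le_trans (mintw _ _ _ TD) _.
  have Hk : \max_(t : T) #|B t| <= 5 * k.
    apply: leq_trans Hm _.
    have h1 : thickness f <= k by rewrite -wid leq_maxr.
    have h2 : crossing_number tE e f <= k by rewrite -wid leq_maxl.
    lia.
  by rewrite /td_width -PoszM lerD2r lez_nat.
move=> alpha _ k w [[T [tE [f [tr th cr]]]] _] [_ mintw].
have [B [TD Hm]] := td_exists f tr He.
apply: le_trans (mintw _ _ _ TD) _.
have Hk : \max_(t : T) #|B t| <= 3 * k + 2 * alpha.
  move: Hm; lia.
by rewrite /td_width -!PoszM -PoszD lerD2r lez_nat.
Qed.
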